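(* For $n\ge2$ and all $P,Q\in\Gamma_n$, $D_{h\Delta}(P\|Q)\le \frac34 D_{J\Delta}(P\|Q)$.
   Context: $\Gamma_n=\{P=(p_1,\dots,p_n): p_i>0,\ \sum p_i=1\}$. $h(P\|Q)=\frac12\sum_{i=1}^n(\sqrt{p_i}-\sqrt{q_i})^2$; $\Delta(P\|Q)=\sum_{i=1}^n\frac{(p_i-q_i)^2}{p_i+q_i}$; $J(P\|Q)=\sum_{i=1}^n(p_i-q_i)\ln\frac{p_i}{q_i}$. $D_{h\Delta}=h-\frac14\Delta$, $D_{J\Delta}=\frac18J-\frac14\Delta$. *)

(* Defs.v *)
(* concrete reals R. A distribution on n points is a function
   p : nat -> R, with only the values at indices 0..n-1 relevant. *)
From Stdlib Require Import Reals.
Open Scope R_scope.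

Fixpoint rsum (n : nat) (f : nat -> R) : R :=
  match n with
  | O => 0
  | S m => rsum m f + f m
  end.

Definition Gamma (n : nat) (p : nat -> R) : Prop :=
  (forall i, (i < n)%nat -> 0 < p i) /\ rsum n p = 1.

Definition hellinger (n : nat) (p q : nat -> R) : R :=
  / 2 * rsum n (fun i => (sqrt (p i) - sqrt (q i)) ^ 2).

Definition triangular (n : nat) (p q : nat -> R) : R :=
  rsum n (fun i => (p i - q i) ^ 2 / (p i + q i)).

Definition jdiv (n : nat) (p q : nat -> R) : R :=
  rsum n (fun i => (p i - q i) * ln (p i / q i)).

Definition D_hDelta (n : nat) (p q : nat -> R) : R :=
  hellinger n p q - / 4 * triangular n p q.

Definition D_JDelta (n : nat) (p q : nat -> R) : R :=
  / 8 * jdiv n p q - / 4 * triangular n p q.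

(* Main.v *)
Require Import Defs.
From Stdlib Require Import Reals Lra Psatz.
From Coquelicot Require Import Coquelicot.
Open Scope R_scope.

Definition gg (x : R) := ln x - (8*(x-1)/(x+1) - (x^2-1)/(x^2+1))/3.
Definition gd (x : R) := (x-1)^4*(3*x^2+2*x+3) / (3*x*(x+1)^2*(x^2+1)^2).

Lemma gg_der x : 0 < x -> derivable_pt_lim gg x (gd x).
Proof.
  intros Hx. apply is_derive_Reals. unfold gg, gd.
  auto_derive.
  - repeat split; nra.
  - field. repeat split; nra.
Qed.

Lemma gd_pos x : 0 < x -> 0 <= gd x.
Proof.
  intros Hx. unfold gd. apply Rmult_le_pos.
  - apply Rmult_le_pos. replace ((x-1)^4) with (((x-1)^2)^2) by ring. apply pow2_ge_0. nra.
  - left. apply Rinv_0_lt_compat. repeat apply Rmult_lt_0_compat; try nra; apply pow_lt; nra.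
Qed.

Lemma gg_sign x : 0 < x -> 0 <= (x - 1) * gg x.
Proof.
  intros Hx. assert (H1 : gg 1 = 0) by (unfold gg; rewrite ln_1; field).
  destruct (Rtotal_order x 1) as [Hl|[He|Hg]].
  - destruct (MVT_cor2 gg gd x 1 Hl) as [c [Hc Hc2]].
    { intros c Hc. apply gg_der. lra. }
    pose proof (gd_pos c ltac:(lra)) as Hp. rewrite H1 in Hc.
    replace ((x-1)*gg x) with (gd c*((1-x)*(1-x))) by (replace (gg x) with (-(0 - gg x)) by ring; rewrite Hc; ring). apply Rmult_le_pos; nra.
  - subst. lra.
  - destruct (MVT_cor2 gg gd 1 x Hg) as [c [Hc Hc2]].
    { intros c Hc. apply gg_der. lra. }
    pose proof (gd_pos c ltac:(lra)) as Hp. rewrite H1 in Hc.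
    replace ((x-1)*gg x) with (gd c*((x-1)*(x-1))) by (replace (gg x) with (gg x - 0) by ring; rewrite Hc; ring). apply Rmult_le_pos; nra.
Qed.

Lemma key x : 0 < x -> 16*(x-1)^2 - 2*(x^2-1)^2/(x^2+1) <= 6*(x^2-1)*ln x.
Proof.
  intros Hx. pose proof (gg_sign x Hx). unfold gg in H.
  assert (E : 6*(x^2-1)*ln x - (16*(x-1)^2 - 2*(x^2-1)^2/(x^2+1)) =
     6*(x+1)* ((x - 1) * (ln x - (8 * (x - 1) / (x + 1) - (x ^ 2 - 1) / (x ^ 2 + 1)) / 3))).
  { field. nra. }
  nra.
Qed.

Lemma point a b : 0 < a -> 0 < b ->
  / 2 * (sqrt a - sqrt b) ^ 2 - / 4 * ((a - b) ^ 2 / (a + b)) <=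
  3 / 32 * ((a - b) * ln (a / b)) - 3 / 16 * ((a - b) ^ 2 / (a + b)).
Proof.
  intros Ha Hb.
  set (s := sqrt a). set (t := sqrt b).
  assert (Hs : 0 < s) by (apply sqrt_lt_R0; lra).
  assert (Ht : 0 < t) by (apply sqrt_lt_R0; lra).
  assert (Ea : a = s * s) by (symmetry; apply sqrt_sqrt; lra).
  assert (Eb : b = t * t) by (symmetry; apply sqrt_sqrt; lra).
  assert (Hx : 0 < s / t) by (apply Rdiv_lt_0_compat; lra).
  pose proof (key (s / t) Hx) as K.
  assert (El : ln (a / b) = 2 * ln (s / t)).
  { replace (a / b) with ((s/t) * (s/t)) by (rewrite Ea, Eb; field; lra).
    rewrite ln_mult by lra. ring. }
  rewrite El. clearbody s t. subst a b.
  set (L := ln (s / t)) in *.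
  assert (K2 : t^2 * (16 * (s / t - 1) ^ 2 - 2 * ((s / t) ^ 2 - 1) ^ 2 / ((s / t) ^ 2 + 1))
              <= t^2 * (6 * ((s / t) ^ 2 - 1) * L)).
  { apply Rmult_le_compat_l; [nra | exact K]. }
  assert (E1 : t^2 * (16 * (s / t - 1) ^ 2 - 2 * ((s / t) ^ 2 - 1) ^ 2 / ((s / t) ^ 2 + 1))
     = 16 * (s - t)^2 - 2 * (s*s - t*t)^2 / (s*s + t*t)).
  { field. split; nra. }
  assert (E2 : t^2 * (6 * ((s / t) ^ 2 - 1) * L) = 6 * (s*s - t*t) * L).
  { field. lra. }
  rewrite E1, E2 in K2.
  assert (E3 : 3 / 32 * ((s * s - t * t) * (2 * L)) - 3 / 16 * ((s * s - t * t) ^ 2 / (s * s + t * t))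
     - (/ 2 * (s - t) ^ 2 - / 4 * ((s * s - t * t) ^ 2 / (s * s + t * t)))
     = / 32 * (6 * (s*s - t*t) * L - (16 * (s - t)^2 - 2 * (s*s - t*t)^2 / (s*s + t*t)))).
  { field. nra. }
  lra.
Qed.

Lemma rsum_lin n (f g h : nat -> R) a b c :
  rsum n (fun i => a * f i + b * g i + c * h i) = a * rsum n f + b * rsum n g + c * rsum n h.
Proof. induction n; simpl; [ring | rewrite IHn; ring]. Qed.

Lemma rsum_le n (f g : nat -> R) :
  (forall i, (i < n)%nat -> f i <= g i) -> rsum n f <= rsum n g.
Proof.
  induction n; intros H; simpl; [lra|].
  pose proof (H n (Nat.lt_succ_diag_r n)).
  assert (rsum n f <= rsum n g) by (apply IHn; intros; apply H; lia). lra.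
Qed.

Theorem proposition5p4 (n : nat) (p q : nat -> R) :
  (2 <= n)%nat -> Gamma n p -> Gamma n q ->
  D_hDelta n p q <= 3 / 4 * D_JDelta n p q.
Proof.
  intros _ [Hp _] [Hq _].
  unfold D_hDelta, D_JDelta, hellinger, triangular, jdiv.
  set (H := fun i => (sqrt (p i) - sqrt (q i)) ^ 2).
  set (T := fun i => (p i - q i) ^ 2 / (p i + q i)).
  set (J := fun i => (p i - q i) * ln (p i / q i)).
  assert (A : / 2 * rsum n H - / 4 * rsum n T =
     rsum n (fun i => / 2 * H i + (- / 4) * T i + 0 * J i)).
  { rewrite rsum_lin. ring. }
  assert (B : 3 / 4 * (/ 8 * rsum n J - / 4 * rsum n T) =
     rsum n (fun i => 0 * H i + (- (3/16)) * T i + (3/32) * J i)).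
  { rewrite rsum_lin. field. }
  rewrite A, B. apply rsum_le. intros i Hi.
  pose proof (point (p i) (q i) (Hp i Hi) (Hq i Hi)).
  unfold H, T, J. lra.
Qed.
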